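(* Let $\mu$ be a valuated matroid on $[n]$. (i) Let $f=(f_1,f_2):[n]\cup\{o\}\to([n]\cup\{o\})\times\mathbb{T}$ be a map with $f_2(i)=0$ whenever $f_1(i)\neq o$. Then for any weakly monomial matrix $A_f$ associated to $f$, $\overline{\operatorname{trop}}(f^{-1}(\mu))=\mathrm{val}(A_f)\odot\overline{\operatorname{trop}}(\mu)$. (ii) Conversely, if $A_f\in K^{n\times n}$ is a weakly monomial matrix with entries in $\{0,1\}$, then its associated map $f$ satisfies $\overline{\operatorname{trop}}(f^{-1}(\mu))=\mathrm{val}(A_f)\odot\overline{\operatorname{trop}}(\mu)$.
   Context: $K$ is a field with non-Archimedean valuation $\mathrm{val}:K\to\mathbb{T}=\mathbb{R}\cup\{\infty\}$; $(\mathrm{val}(M)\odot v)_i=\min_j(\mathrm{val}(M_{ij})+v_j)$, applied pointwise to sets. Valuated matroid of rank $r$ on finite $E$: $\nu:\binom{E}{r}\to\mathbb{T}$, not identically $\infty$, with exchange property (for all $I,J$, $i\in I\setminus J$ there is $j\in J\setminus I$ with $\nu(I)+\nu(J)\ge\nu((I\setminus i)\cup j)+\nu((J\setminus j)\cup i)$), up to additive constants; $\overline{\operatorname{trop}}(\nu)\subseteq\mathbb{P}(\mathbb{T}^E)$ is the set of $x$ with $\min_e(C_\nu(I)_e+x_e)$ attained at least twice for all $I\in\binom{E}{r+1}$ with $C_\nu(I)\ne(\infty,\dots)$, where $C_\nu(I)_e=\nu(I\setminus e)$ for $e\in I$, $\infty$ else. Pointed matroid $\mu_o$: $\mu$ extended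 to $[n]\cup\{o\}$ with $o$ a loop. With $S=f_1([n]\cup\{o\})$, the affine induced valuated matroid is $f^{-1}(\mu)(B)=\mu_o|_S(f_1(B))+\sum_{i\in B}f_2(i)$, where $\mu_o|_S$ is the restriction of $\mu_o$ to $S$ and $|B|$ equals its rank (value $\infty$ if $|f_1(B)|$ is too small); $\overline{\operatorname{trop}}(f^{-1}(\mu))$ denotes the projection to the coordinates in $[n]$ of its tropical linear space. Weakly monomial: at most one nonzero entry per row. Associated matrix of $f$ (defined when $f_2(i)\in\mathrm{val}(K)$ for all $i\in[n]$): $(A_f)_{ij}=k_i$ if $f_1(i)=j\in[n]$ with $\mathrm{val}(k_i)=f_2(i)$, and $0$ otherwise. Associated map of a weakly monomial $M$: $f(o)=(o,\infty)$; $f(i)=(o,\infty)$ if row $i$ of $M$ is zero; $f(i)=(j,\mathrm{val}(M_{ij}))$ if $M_{ij}\neq0$. *)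

(* Defs.v *)
From HB Require Import structures.
From mathcomp Require Import all_boot all_order all_algebra.
From mathcomp Require Import reals.
Set Implicit Arguments. Unset Strict Implicit. Unset Printing Implicit Defensive.
Import Order.TTheory GRing.Theory Num.Theory.
Local Open Scope ring_scope.

(* ---------- The tropical semiring T = R u {oo}, oo = None ---------- *)
Definition T (R : realType) := option R.

Section Trop.
Variable R : realType.

(* tropical product = ordinary addition, with oo absorbing *)
Definition Tadd (x y : T R) : T R :=
  match x, y with Some a, Some b => Some (a + b) | _, _ => None end.

Definition Tle (x y : T R) : bool :=
  match x, y with
  | _, None => true
  | None, Some _ => false
  | Some a, Some b => a <= b
  end.

Definition Tmin (x y : T R) : T R := if Tle x y then x else y.

Definition nonarch_valuation (K : fieldType) (val : K -> T R) : Prop :=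
  [/\ forall x, val x = None <-> x = 0,
      forall x y, val (x * y) = Tadd (val x) (val y)
    & forall x y, Tle (Tmin (val x) (val y)) (val (x + y))].

Definition tmatvec (K : fieldType) (val : K -> T R) (n : nat) (M : 'M[K]_n)
    (v : 'I_n -> T R) : 'I_n -> T R :=
  fun i => \big[Tmin/None]_(j < n) Tadd (val (M i j)) (v j).

(* nu is given on all subsets; only its values on r-subsets matter. *)
Definition valuated_matroid (E : finType) (r : nat) (nu : {set E} -> T R) : Prop :=
  (exists B : {set E}, #|B| = r /\ nu B <> None) /\
  forall I J : {set E}, #|I| = r -> #|J| = r ->
    forall i, i \in I :\: J ->
      exists2 j, j \in J :\: I &
        Tle (Tadd (nu (j |: (I :\ i))) (nu (i |: (J :\ j)))) (Tadd (nu I) (nu J)).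

Definition circ (E : finType) (nu : {set E} -> T R) (I : {set E}) (e : E) : T R :=
  if e \in I then nu (I :\ e) else None.

(* the tropical linear space trop(nu) of a rank-r valuated matroid, as the set of
   representatives x in T^E \ {(oo,...,oo)} of points of P(T^E)
   (it is invariant under adding a real constant) *)
Definition trop (E : finType) (r : nat) (nu : {set E} -> T R) (x : E -> T R) : Prop :=
  (exists e, x e <> None) /\
  forall I : {set E}, #|I| = r.+1 -> (exists e, circ nu I e <> None) ->
    let m := \big[Tmin/None]_(e : E) Tadd (circ nu I e) (x e) in
    exists e1 e2 : E, [/\ e1 <> e2,
      Tadd (circ nu I e1) (x e1) = m & Tadd (circ nu I e2) (x e2) = m].

Definition rank_in (E : finType) (r : nat) (nu : {set E} -> T R) (S : {set E}) : nat :=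
  (\max_(B : {set E} | (#|B| == r) && (nu B != None)) #|B :&: S|)%N.

(* restriction nu|_S, a valuated matroid of rank rank_in r nu S on S
   (well defined up to an additive constant; here the choice-free formula
    nu|_S(B) = min_{C subset E\S, |C| = r - r_S} nu(B u C)) *)
Definition restr (E : finType) (r : nat) (nu : {set E} -> T R) (S : {set E})
    (B : {set E}) : T R :=
  \big[Tmin/None]_(C : {set E} | (C \subset ~: S) && (#|C| == r - rank_in r nu S)%N)
     nu (B :|: C).

(* [n] u {o} is  option 'I_n,  with o = None *)
Definition pointed (n : nat) (mu : {set 'I_n} -> T R) (B : {set option 'I_n}) : T R :=
  if None \in B then None else mu [set i | Some i \in B].

Definition Tsum (E : finType) (B : {set E}) (g : E -> T R) : T R :=
  \big[Tadd/Some 0]_(i in B) g i.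

Definition fimage (n : nat) (f1 : option 'I_n -> option 'I_n) : {set option 'I_n} :=
  f1 @: [set: option 'I_n].

Definition induced_rank (n r : nat) (mu : {set 'I_n} -> T R)
    (f1 : option 'I_n -> option 'I_n) : nat :=
  rank_in r (pointed mu) (fimage f1).

Definition induced (n r : nat) (mu : {set 'I_n} -> T R)
    (f1 : option 'I_n -> option 'I_n) (f2 : option 'I_n -> T R)
    (B : {set option 'I_n}) : T R :=
  if #|f1 @: B| == #|B| then
    Tadd (restr r (pointed mu) (fimage f1) (f1 @: B)) (Tsum B f2)
  else None.

(* projection to the coordinates in [n] of trop(f^{-1}(mu)) *)
Definition trop_induced (n r : nat) (mu : {set 'I_n} -> T R)
    (f1 : option 'I_n -> option 'I_n) (f2 : option 'I_n -> T R) (y : 'I_n -> T R) : Prop :=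
  exists2 x : option 'I_n -> T R,
    trop (induced_rank r mu f1) (induced r mu f1 f2) x & forall i, x (Some i) = y i.

Definition trop_image (K : fieldType) (val : K -> T R) (n r : nat)
    (mu : {set 'I_n} -> T R) (A : 'M[K]_n) (y : 'I_n -> T R) : Prop :=
  exists2 x : 'I_n -> T R, trop r mu x & forall i, tmatvec val A x i = y i.

(* equality of the two subsets of P(T^n) (both sides are cones, so it suffices
   to compare representatives that are not (oo,...,oo)) *)
Definition Pset_eq (n : nat) (P Q : ('I_n -> T R) -> Prop) : Prop :=
  forall y : 'I_n -> T R, (exists i, y i <> None) -> (P y <-> Q y).

Definition weakly_monomial (K : fieldType) (n : nat) (A : 'M[K]_n) : Prop :=
  forall i j1 j2, A i j1 != 0 -> A i j2 != 0 -> j1 = j2.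

Definition assoc_matrix (K : fieldType) (val : K -> T R) (n : nat)
    (f1 : option 'I_n -> option 'I_n) (f2 : option 'I_n -> T R) (A : 'M[K]_n) : Prop :=
  (forall i : 'I_n, exists k : K, val k = f2 (Some i)) /\
  forall i j : 'I_n,
    (f1 (Some i) = Some j -> val (A i j) = f2 (Some i)) /\
    (f1 (Some i) <> Some j -> A i j = 0).

Definition assoc_map1 (K : fieldType) (n : nat) (A : 'M[K]_n)
    (i : option 'I_n) : option 'I_n :=
  match i with
  | None => None
  | Some i => [pick j | A i j != 0]
  end.

Definition assoc_map2 (K : fieldType) (val : K -> T R) (n : nat) (A : 'M[K]_n)
    (i : option 'I_n) : T R :=
  match i with
  | None => None
  | Some i => if [pick j | A i j != 0] is Some j then val (A i j) else None
  end.

End Trop.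

(* Main.v *)
Require Import Defs.
From HB Require Import structures.
From mathcomp Require Import all_boot all_order all_algebra.
From mathcomp Require Import reals.
From mathcomp Require Import lra zify.
Set Implicit Arguments. Unset Strict Implicit. Unset Printing Implicit Defensive.
Import Order.TTheory GRing.Theory Num.Theory.
Local Open Scope ring_scope.


Section TLib.
Variable R : realType.
Implicit Types a b c d : T R.

Lemma Tle_refl a : Tle a a.
Proof. by case: a => //= a. Qed.
Lemma Tle_trans a b c : Tle a b -> Tle b c -> Tle a c.
Proof. case: a; case: b; case: c => //= x y z; exact: le_trans. Qed.
Lemma Tle_anti a b : Tle a b -> Tle b a -> a = b.
Proof. case: a => [x|]; case: b => [y|] //= h1 h2. by congr Some; apply/eqP; rewrite eq_le h1 h2. Qed.
Lemma Tle_total a b : Tle a b || Tle b a.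
Proof. case: a; case: b => //= x y; exact: le_total. Qed.
Lemma Tle_None a : Tle a None.
Proof. by case: a. Qed.
Lemma Tle_Nonel a : Tle None a -> a = None.
Proof. by case: a. Qed.
Lemma TaddC a b : Tadd a b = Tadd b a.
Proof. by case: a; case: b => //= x y; rewrite addrC. Qed.
Lemma TaddA a b c : Tadd a (Tadd b c) = Tadd (Tadd a b) c.
Proof. by case: a; case: b; case: c => //= x y z; rewrite addrA. Qed.
Lemma Tadd0 a : Tadd a (Some 0) = a.
Proof. by case: a => //= x; rewrite addr0. Qed.
Lemma TaddN a : Tadd a None = None.
Proof. by case: a. Qed.
Lemma TaddfinP a b : Tadd a b <> None -> a <> None /\ b <> None.
Proof. by case: a; case: b. Qed.
Lemma Tle_add2l a b c : Tle b c -> Tle (Tadd a b) (Tadd a c).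
Proof. case: a; case: b; case: c => //= x y z; by rewrite lerD2l. Qed.
Lemma Tle_add2r a b c : Tle b c -> Tle (Tadd b a) (Tadd c a).
Proof. by rewrite !(TaddC _ a); apply: Tle_add2l. Qed.
Lemma Tle_add a b c d : Tle a b -> Tle c d -> Tle (Tadd a c) (Tadd b d).
Proof. move=> h1 h2; apply: Tle_trans (Tle_add2r _ h1) (Tle_add2l _ h2). Qed.
Lemma Tle_add2l_cancel (x : R) b c : Tle (Tadd (Some x) b) (Tadd (Some x) c) -> Tle b c.
Proof. case: b; case: c => //= y z; by rewrite lerD2l. Qed.

Lemma TminE a b : Tmin a b =
  match a, b with Some x, Some y => Some (Order.min x y) | None, _ => b | _, None => a end.
Proof.
rewrite /Tmin; case: a => [x|]; case: b => [y|] //=.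
rewrite /Order.min; case: ifP => h; case: ifP => h' //.
- move/negbT: h'; rewrite -leNgt => h'.
  by congr Some; apply/eqP; rewrite eq_le h h'.
- move/negbT: h; rewrite -ltNge => h. by have := lt_trans h h'; rewrite ltxx.
Qed.

Lemma TminA : associative (@Tmin R).
Proof.
move=> a b c; rewrite !TminE; case: a => [x|]; case: b => [y|]; case: c => [z|] //=;
by rewrite minA.
Qed.
Lemma TminC : commutative (@Tmin R).
Proof. move=> a b; rewrite !TminE; case: a => [x|]; case: b => [y|] //=; by rewrite minC. Qed.
Lemma Tmin0 : left_id None (@Tmin R).
Proof. by move=> a; rewrite /Tmin; case: a. Qed.

HB.instance Definition _ := Monoid.isComLaw.Build (T R) None (@Tmin R) TminA TminC Tmin0.

Lemma Tmin_lel a b : Tle (Tmin a b) a.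
Proof. rewrite /Tmin; case: ifP => [_|/negbT h]; first exact: Tle_refl.
by have := Tle_total a b; rewrite (negbTE h). Qed.
Lemma Tmin_ler a b : Tle (Tmin a b) b.
Proof. by rewrite TminC; apply: Tmin_lel. Qed.
Lemma Tmin_glb a b c : Tle c a -> Tle c b -> Tle c (Tmin a b).
Proof. by rewrite /Tmin; case: ifP. Qed.
Lemma Tmin_or a b : Tmin a b = a \/ Tmin a b = b.
Proof. rewrite /Tmin; case: ifP; by [left|right]. Qed.

Section Big.
Variable (I : finType) (P : pred I) (F : I -> T R).
Definition bmin := \big[@Tmin R/None]_(i | P i) F i.
Lemma bmin_le i : P i -> Tle bmin (F i).
Proof. by move=> Pi; rewrite /bmin (bigD1 i) //=; apply: Tmin_lel. Qed.
Lemma bmin_glb c : (forall i, P i -> Tle c (F i)) -> Tle c bmin.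
Proof. move=> h; rewrite /bmin; apply: (big_ind (fun v => Tle c v)).
- exact: Tle_None.
- by move=> x y; apply: Tmin_glb.
- exact: h.
Qed.
Lemma bmin_att : bmin = None \/ exists2 i, P i & bmin = F i.
Proof.
rewrite /bmin; apply: (big_rec (fun v => v = None \/ exists2 i, P i & v = F i)); first by left.
move=> i v Pi IH; case: (Tmin_or (F i) v) => ->; [right; by exists i|done].
Qed.
Lemma bmin_fin : bmin <> None -> exists2 i, P i & bmin = F i.
Proof. by case: bmin_att. Qed.
Lemma bmin_None : (forall i, P i -> F i = None) -> bmin = None.
Proof. move=> h; apply: Tle_Nonel; apply: bmin_glb => i Pi; rewrite h //; exact: Tle_refl. Qed.
End Big.
End TLib.


Section Abstract.
Variable R : realType.
Variable E : finType.
Implicit Types (nu : {set E} -> T R) (x : E -> T R) (I J B H S : {set E}).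

Definition tm nu I x e := Tadd (circ nu I e) (x e).
Definition CC k nu x := forall I, #|I| = k.+1 -> forall e, tm nu I x e <> None ->
  exists2 e', e' != e & Tle (tm nu I x e') (tm nu I x e).
Definition CCS k nu S x := forall I, I \subset S -> #|I| = k.+1 -> forall e, tm nu I x e <> None ->
  exists2 e', e' != e & Tle (tm nu I x e') (tm nu I x e).

Lemma tm_fin nu I x e : tm nu I x e <> None ->
  [/\ e \in I, nu (I :\ e) <> None & x e <> None].
Proof.
rewrite /tm /circ; case: ifP => eI; last by [].
by move/TaddfinP => [h1 h2].
Qed.

Lemma tmE nu I x e : e \in I -> tm nu I x e = Tadd (nu (I :\ e)) (x e).
Proof. by rewrite /tm /circ => ->. Qed.

Lemma trop_CC k nu x : trop k nu x -> CC k nu x.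
Proof.
move=> [_ h] I cI e he.
have [e1 [e2 [ne12 h1 h2]]] : exists e1 e2 : E, [/\ e1 <> e2,
      Tadd (circ nu I e1) (x e1) = \big[@Tmin R/None]_(e : E) Tadd (circ nu I e) (x e)
    & Tadd (circ nu I e2) (x e2) = \big[@Tmin R/None]_(e : E) Tadd (circ nu I e) (x e)].
  apply: h => //; exists e; by case/tm_fin: he => eI + _; rewrite /circ eI.
have hle : Tle (\big[@Tmin R/None]_(e : E) Tadd (circ nu I e) (x e)) (tm nu I x e).
  exact: (@bmin_le _ _ xpredT (fun e => Tadd (circ nu I e) (x e))).
case: (eqVneq e1 e) => [E1|N1].
- exists e2; first by apply/eqP => E2; apply: ne12; rewrite E1 E2.
  by rewrite /tm h2.
- by exists e1 => //; rewrite /tm h1.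
Qed.

Lemma CC_trop k nu x : (exists e, x e <> None) -> CC k nu x -> trop k nu x.
Proof.
move=> nz hcc; split => // I cI [e0 he0].
set F := fun e => Tadd (circ nu I e) (x e).
change (exists e1 e2 : E, [/\ e1 <> e2, F e1 = bmin xpredT F & F e2 = bmin xpredT F]).
have hle : forall e, Tle (bmin xpredT F) (tm nu I x e).
  move=> e; exact: (@bmin_le _ _ xpredT F).
case mN : (bmin xpredT F) => [mv|].
- have [e1 _ me1] : exists2 i, xpredT i & bmin xpredT F = F i.
    by case: (@bmin_att _ _ xpredT F) => //; rewrite mN.
  have [e2 ne21 le21] : exists2 e', e' != e1 & Tle (tm nu I x e') (tm nu I x e1).
    by apply: hcc => //; rewrite /tm -/(F e1) -me1 mN.
  exists e1, e2; split; first by apply/eqP; rewrite eq_sym.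
  + by rewrite -me1 mN.
  + apply: Tle_anti; last by rewrite -mN; exact: hle.
    by rewrite -mN me1; exact: le21.
- case: nz => e1 he1.
  case: (eqVneq e1 e0) => [E1|N1].
  + exfalso; have := hle e0; rewrite mN => /Tle_Nonel.
    rewrite /tm; subst e1; by case: (circ nu I e0) he0; case: (x e0) he1.
  + exists e1, e0; split; first by apply/eqP.
    * by apply: Tle_Nonel; rewrite -mN; apply: hle.
    * by apply: Tle_Nonel; rewrite -mN; apply: hle.
Qed.

Lemma Tle_fin (a b : T R) : Tle a b -> b <> None -> a <> None.
Proof. by case: a; case: b. Qed.

Lemma basis_contains k nu x B a : CC k nu x -> #|B| = k -> nu B <> None -> x a <> None ->
  exists B', [/\ #|B'| = k, nu B' <> None & a \in B'].
Proof.
move=> hcc cB nB xa; case aB: (a \in B); first by exists B.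
have cI : #|a |: B| = k.+1 by rewrite cardsU1 aB cB.
have ha : tm nu (a |: B) x a <> None.
  rewrite tmE ?setU11 // setU1K ?aB //; by case: (nu B) nB => // ?; case: (x a) xa.
have [c nca hle] := hcc _ cI _ ha.
have [cI' ncI _] := tm_fin (Tle_fin hle ha).
exists ((a |: B) :\ c); split => //.
- by move: cI; rewrite (cardsD1 c) cI' add1n => -[].
- by rewrite !inE eqxx /= andbT eq_sym.
Qed.

Lemma loop_none k nu x B a : CC k nu x -> #|B| = k -> nu B <> None ->
  (forall B', a \in B' -> nu B' = None) -> x a = None.
Proof.
move=> hcc cB nB hl; case xa: (x a) => [v|] //.
have xa' : x a <> None by rewrite xa.
have [B' [_ nB' aB']] := basis_contains hcc cB nB xa'.
by move: (hl _ aB').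
Qed.

Lemma setU1D1 (a j : E) I : a \in I -> j != a -> a |: ((I :\ a) :\ j) = I :\ j.
Proof.
move=> aI nja; apply/setP => y; rewrite !inE.
case: (eqVneq y a) => [->|nya] /=; first by rewrite eq_sym nja aI.
by rewrite andbC.
Qed.

Lemma cocircuit_CC r nu H : valuated_matroid r nu -> #|H|.+1 = r ->
  CC r nu (fun f => if f \in H then None else nu (f |: H)).
Proof.
move=> [_ hex] cH I cI e he.
have [eI nIe Ue] := tm_fin he; move: Ue => /=; case: ifP => eH // neH.
have c1 : #|e |: H| = r by rewrite cardsU1 eH.
have c2 : #|I :\ e| = r by move: cI; rewrite (cardsD1 e) eI add1n => -[].
have ie : e \in (e |: H) :\: (I :\ e) by rewrite !inE eqxx.
have [j jin hle] := hex _ _ c1 c2 e ie.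
move: jin; rewrite !inE negb_or => /andP[/andP[nje jH] /andP[_ jI]].
exists j => //.
rewrite tmE // tmE // /= (negbTE jH) eH.
move: hle; rewrite setU1K ?eH // setU1D1 //.
by rewrite (TaddC (nu (I :\ j))) (TaddC (nu (I :\ e))).
Qed.

Lemma min_CC k nu (G : {set E}) (U : E -> E -> T R) (lam : E -> R) :
  (forall e, e \in G -> CC k nu (U e)) ->
  CC k nu (fun f => bmin (mem G) (fun e => Tadd (Some (lam e)) (U e f))).
Proof.
move=> hU I cI a ha.
have [aI nIa Xa] := tm_fin ha.
have [e eG Xe] := bmin_fin Xa.
have hUa : tm nu I (U e) a <> None.
  rewrite tmE //; move: Xa; rewrite Xe.
  by case: (nu (I :\ a)) nIa => // ?; case: (U e a).
have [a' na'a hle] := hU e eG I cI a hUa.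
exists a' => //.
apply: (@Tle_trans _ _ (Tadd (Some (lam e)) (tm nu I (U e) a'))).
  rewrite /tm TaddA (TaddC (Some _)) -TaddA; apply: Tle_add2l.
  exact: (@bmin_le _ _ (mem G) (fun e => Tadd (Some (lam e)) (U e a'))).
rewrite {2}/tm /= Xe TaddA (TaddC (circ _ _ _)) -TaddA.
exact: Tle_add2l.
Qed.
End Abstract.


Section Rank.
Variable R : realType.
Variable E : finType.
Variable r : nat.
Variable nu : {set E} -> T R.
Variable S : {set E}.
Implicit Types (x : E -> T R) (I J B H C : {set E}).

Lemma rank_ge B : #|B| = r -> nu B <> None -> (#|B :&: S| <= rank_in r nu S)%N.
Proof.
move=> cB nB; rewrite /rank_in.
apply: (leq_bigmax_cond (P := fun B => (#|B| == r) && (nu B != None)) (F := fun B => #|B :&: S|)).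
by rewrite cB eqxx; apply/eqP.
Qed.

Lemma rank_att : valuated_matroid r nu ->
  exists B0, [/\ #|B0| = r, nu B0 <> None & #|B0 :&: S| = rank_in r nu S].
Proof.
move=> [[B [cB nB]] _].
have PB : (fun B => (#|B| == r) && (nu B != None)) B by rewrite /= cB eqxx; apply/eqP.
case: (@arg_maxnP _ B (fun B => (#|B| == r) && (nu B != None)) (fun B => #|B :&: S|) PB) => B0 /andP[/eqP c0 /eqP n0] h0.
exists B0; split => //; apply/eqP; rewrite eqn_leq; apply/andP; split.
- by apply: rank_ge.
- by apply/bigmax_leqP => B1; apply: h0.
Qed.

Lemma rank_le : (rank_in r nu S <= r)%N.
Proof.
apply/bigmax_leqP => B /andP[/eqP cB _]; rewrite -cB.
by apply: subset_leq_card; apply: subsetIl.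
Qed.

Definition rkC := rank_in r nu S.
Definition rhoC := restr r nu S.
Local Notation rk := rkC.
Local Notation rho := rhoC.

Lemma restr_le J C : C \subset ~: S -> #|C| = (r - rk)%N -> Tle (rho J) (nu (J :|: C)).
Proof.
move=> CS cC; rewrite /rhoC /restr.
apply: (@bmin_le _ _ (fun C => (C \subset ~: S) && (#|C| == r - rank_in r nu S)%N)
   (fun C => nu (J :|: C))).
by rewrite CS cC eqxx.
Qed.

Lemma restr_att J : rho J <> None ->
  exists C, [/\ C \subset ~: S, #|C| = (r - rk)%N & rho J = nu (J :|: C)].
Proof.
move=> h.
have [C /andP[CS /eqP cC] e] := @bmin_fin _ _ (fun C => (C \subset ~: S) && (#|C| == r - rank_in r nu S)%N)
   (fun C => nu (J :|: C)) h.
by exists C.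
Qed.

Lemma restr_None J : (forall C, nu (J :|: C) = None) -> rho J = None.
Proof. move=> h; rewrite /rhoC /restr; exact: (@bmin_None _ _ _ (fun C => nu (J :|: C))). Qed.

Lemma disjSC J C : J \subset S -> C \subset ~: S -> J :&: C = set0.
Proof.
move=> /subsetP JS /subsetP CS; apply/setP => y; rewrite !inE.
apply/andP => -[/JS yS /CS]; by rewrite inE yS.
Qed.

Lemma card_disj J C : J \subset S -> C \subset ~: S -> #|J :|: C| = (#|J| + #|C|)%N.
Proof. move=> JS CS; by rewrite cardsU disjSC // cards0 subn0. Qed.

Lemma setUD1l J C a : a \notin C -> (J :|: C) :\ a = (J :\ a) :|: C.
Proof.
move=> aC; apply/setP => y; rewrite !inE.
case: (eqVneq y a) => [->|] //=; by rewrite (negbTE aC).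
Qed.

Lemma lemmaA x : CC r nu x -> CCS rk rho S x.
Proof.
move=> hcc J JS cJ s hs.
have [sJ nJs xs] := tm_fin hs.
have [C [CS cC eC]] := restr_att nJs.
have sS : s \in S by move/subsetP: JS; apply.
have sC : s \notin C by apply/negP => /(subsetP CS); rewrite inE sS.
have cK : #|J :|: C| = r.+1.
  by rewrite card_disj // cJ cC addSn subnKC //; apply: rank_le.
have hsK : tm nu (J :|: C) x s = tm rho J x s.
  by rewrite !tmE ?inE ?sJ // setUD1l // eC.
have hK : tm nu (J :|: C) x s <> None by rewrite hsK.
have [e' ne' hle] := hcc _ cK s hK.
have [e'K nKe xe'] := tm_fin (Tle_fin hle hK).
have e'J : e' \in J.
  case/setUP: (e'K) => [//|e'C]; exfalso.
  have cKe : #|(J :|: C) :\ e'| = r by move: cK; rewrite (cardsD1 e') e'K add1n => -[].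
  have := rank_ge cKe nKe; rewrite -/rkC.
  have : J \subset ((J :|: C) :\ e') :&: S.
    apply/subsetP => y yJ; have yS := subsetP JS _ yJ; rewrite !inE yJ yS orTb andbT.
    rewrite andbT; apply/negP => /eqP ye; move/subsetP: CS => /(_ _ e'C); by rewrite inE -ye yS.
  move/subset_leq_card; rewrite cJ => h1 h2.
  by have := leq_trans h1 h2; rewrite ltnn.
exists e' => //.
apply: Tle_trans (Tle_trans _ hle) _; last by rewrite hsK; exact: Tle_refl.
have e'C : e' \notin C by apply/negP => /(subsetP CS); rewrite inE (subsetP JS _ e'J).
rewrite !tmE ?inE ?e'J // setUD1l //; apply: Tle_add2r; exact: restr_le.
Qed.
End Rank.


Section Lift.
Variable R : realType.
Variable E : finType.
Variable r : nat.
Variable nu : {set E} -> T R.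
Variable S : {set E}.
Hypothesis vm : valuated_matroid r nu.
Variable z : E -> T R.
Hypothesis hz : CCS (rkC r nu S) (rhoC r nu S) S z.

Implicit Types (B J : {set E}) (e f s : E).
Local Notation rk := (rkC r nu S).
Local Notation rho := (rhoC r nu S).

Definition Fs := [set s in S | z s == None].
Definition Gs := [set s in S | z s != None].
Definition zr s := odflt 0 (z s).
Definition Vb := [set J : {set E} | [&& J \subset S, #|J| == rk & rho J != None]].
Definition aF := (\max_(J in Vb) #|J :&: Fs|)%N.
Definition Vs := [set J in Vb | #|J :&: Fs| == aF].
Definition W J := odflt 0 (rho J) - \sum_(s in J :&: Gs) zr s.
Definition optb B := (B \in Vs) && [forall J in Vs, W B <= W J].

Lemma zG s : s \in Gs -> z s = Some (zr s).
Proof. rewrite inE /zr; case: (z s) => [a|] //=; by rewrite andbF. Qed.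

Lemma GS s : s \in Gs -> s \in S.
Proof. by rewrite inE => /andP[]. Qed.

Lemma Vb_ex : exists J0, J0 \in Vb.
Proof.
have [B0 [cB nB iB]] := rank_att S vm.
exists (B0 :&: S); rewrite inE subsetIr /rkC iB eqxx /=.
have hC : B0 :\: S \subset ~: S by apply/subsetP => y; rewrite !inE => /andP[].
have cC : #|B0 :\: S| = (r - rk)%N by rewrite /rkC -iB -cB -(cardsID S B0) addKn.
have := restr_le (B0 :&: S) hC cC; rewrite setID.
by case: (rho (B0 :&: S)) => //; case: (nu B0) nB.
Qed.

Lemma Vs_ex : exists J, J \in Vs.
Proof.
have [J0 J0V] := Vb_ex.
case: (@arg_maxnP _ J0 (mem Vb) (fun J => #|J :&: Fs|) J0V) => J JV hJ.
exists J; rewrite inE; apply/andP; split; first exact: JV.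
apply/eqP; apply/eqP; rewrite eqn_leq; apply/andP; split.
- exact: (leq_bigmax_cond (P := mem Vb) (F := fun J => #|J :&: Fs|)).
- by apply/bigmax_leqP => J1; apply: hJ.
Qed.

Lemma opt_ex : exists B, optb B.
Proof.
have [J0 J0V] := Vs_ex.
case: (@arg_minP _ _ _ J0 (mem Vs) W J0V) => B BV hB.
exists B; rewrite /optb; apply/andP; split; first exact: BV.
apply/forall_inP => J JV; exact: hB.
Qed.

Lemma sum_swap B e f : e \in B -> e \in Gs -> f \in Gs -> f \notin B ->
  \sum_(s in (f |: (B :\ e)) :&: Gs) zr s = \sum_(s in B :&: Gs) zr s - zr e + zr f.
Proof.
move=> eB eG fG fB.
have -> : (f |: (B :\ e)) :&: Gs = f |: ((B :&: Gs) :\ e).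
  apply/setP => y; rewrite !in_setI !in_setU1 !in_setD1; case: (eqVneq y f) => [->|] /=; first by rewrite fG.
  by rewrite in_setI andbA.
rewrite (@big_setU1 R 0 _ _ f) /=; last by rewrite !inE (negbTE fB) !andbF.
rewrite (@big_setD1 R 0 _ _ e (B :&: Gs)) /=; last by rewrite inE eB eG.
by set t := \sum_(i in _) _; lra.
Qed.

Lemma cardF_same B e f : e \notin Fs -> f \notin Fs ->
  (f |: (B :\ e)) :&: Fs = B :&: Fs.
Proof.
move=> eF fF; apply/setP => y; rewrite !inE.
case: (eqVneq y f) => [->|] /=; first by move: fF; rewrite inE => /negbTE ->; rewrite andbF.
case: (eqVneq y e) => [->|] //=; by move: eF; rewrite inE => /negbTE ->; rewrite andbF.
Qed.

Lemma cardF_plus B e f : e \notin Fs -> f \in Fs -> f \notin B ->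
  #|(f |: (B :\ e)) :&: Fs| = #|B :&: Fs|.+1.
Proof.
move=> eF fF fB.
have -> : (f |: (B :\ e)) :&: Fs = f |: (B :&: Fs).
  apply/setP => y; rewrite !inE.
  case: (eqVneq y f) => [->|] /=; first by move: fF; rewrite inE.
  case: (eqVneq y e) => [->|] //=; by move: eF; rewrite inE => /negbTE ->; rewrite andbF.
by rewrite cardsU1 inE (negbTE fB).
Qed.

Lemma swapV B e f : B \in Vb -> e \in B -> f \in S -> f \notin B ->
  rho (f |: (B :\ e)) <> None -> f |: (B :\ e) \in Vb.
Proof.
rewrite !inE => /and3P[BS /eqP cB _] eB fS fB nB'.
apply/and3P; split.
- apply/subsetP => y; rewrite !inE => /orP[/eqP->//|/andP[_ yB]]; exact: (subsetP BS).
- by rewrite cardsU1 !inE (negbTE fB) andbF /= -cB (cardsD1 e B) eB.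
- by apply/eqP.
Qed.

Lemma W_swap B e f : e \in B -> e \in Gs -> f \in Gs -> f \notin B ->
  rho B = Some (odflt 0 (rho B)) -> rho (f |: (B :\ e)) = Some (odflt 0 (rho (f |: (B :\ e)))) ->
  W (f |: (B :\ e)) = odflt 0 (rho (f |: (B :\ e))) - (\sum_(s in B :&: Gs) zr s - zr e + zr f).
Proof. by move=> eB eG fG fB _ _; rewrite /W sum_swap. Qed.

Lemma opt_contains e : e \in Gs -> exists B, optb B /\ e \in B.
Proof.
move=> eG.
have [B0 /andP[B0s /forall_inP hB0]] := opt_ex.
case eB0: (e \in B0); first by exists B0; rewrite /optb B0s; split => //; apply/forall_inP.
have B0V : B0 \in Vb by move: B0s; rewrite inE => /andP[].
move: (B0V); rewrite inE => /and3P[B0S /eqP cB0 nB0].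
have eS := GS eG.
have IS : e |: B0 \subset S by rewrite subUset sub1set eS B0S.
have cI : #|e |: B0| = rk.+1 by rewrite cardsU1 eB0 cB0.
have he : tm rho (e |: B0) z e <> None.
  rewrite tmE ?setU11 // setU1K ?eB0 // zG //.
  by case: (rho B0) nB0.
have [e' ne' hle] := hz IS cI he.
have [e'I nIe' ze'] := tm_fin (Tle_fin hle he).
have e'B0 : e' \in B0 by move: e'I; rewrite !inE (negbTE ne') /=.
have e'G : e' \in Gs by rewrite inE (subsetP B0S _ e'B0); apply/eqP.
have Ieq : (e |: B0) :\ e' = e |: (B0 :\ e').
  apply/setP => y; rewrite !inE; case: (eqVneq y e') => [->|] /=; first by rewrite (negbTE ne').
  by [].
rewrite Ieq in nIe' hle.
have B1V : e |: (B0 :\ e') \in Vb by apply: swapV; rewrite ?eB0.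
have eF : e \notin Fs by move: eG; rewrite !inE => /andP[-> /negbTE ->].
have e'F : e' \notin Fs by move: e'G; rewrite !inE => /andP[-> /negbTE ->].
have B1s : e |: (B0 :\ e') \in Vs.
  by rewrite inE B1V cardF_same //; move: B0s; rewrite inE => /andP[].
exists (e |: (B0 :\ e')); split; last by rewrite setU11.
rewrite /optb B1s /=; apply/forall_inP => J JV.
apply: le_trans (hB0 _ JV).
rewrite /W sum_swap ?eB0 //.
move: hle; rewrite !tmE ?setU11 ?inE ?eqxx ?e'B0 ?orbT //.
rewrite setU1K ?eB0 // Ieq zG // zG //.
case: (rho (e |: (B0 :\ e'))) nIe' => // v1 _; case: (rho B0) nB0 => // v0 _ /=.
move=> h; lra.
Qed.


Definition pb e (BC : {set E} * {set E}) : bool :=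
  [&& optb BC.1, e \in BC.1, BC.2 \subset ~: S, #|BC.2| == (r - rk)%N & rho BC.1 == nu (BC.1 :|: BC.2)].

Lemma pb_ex e : e \in Gs -> exists BC, pb e BC.
Proof.
move=> eG; have [B [oB eB]] := opt_contains eG.
have BV : B \in Vb by move: oB => /andP[]; rewrite inE => /andP[].
have nB : rho B <> None by move: BV; rewrite inE => /and3P[_ _ /eqP].
have [C [CS cC eC]] := restr_att nB.
by exists (B, C); rewrite /pb /= oB eB CS cC eC !eqxx.
Qed.

Definition BCf e := odflt (set0, set0) [pick BC | pb e BC].
Lemma BCfP e : e \in Gs -> pb e (BCf e).
Proof.
move=> eG; rewrite /BCf; case: pickP => [BC h //|h].
by have [BC hBC] := pb_ex eG; move: (h BC); rewrite hBC.
Qed.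

Definition Bf e := (BCf e).1.
Definition Cf e := (BCf e).2.
Definition Hf e := (Bf e :\ e) :|: Cf e.
Definition Uf e f := if f \in Hf e then None else nu (f |: Hf e).
Definition lam e := zr e - odflt 0 (nu (Bf e :|: Cf e)).
Definition xl f := bmin (mem Gs) (fun e => Tadd (Some (lam e)) (Uf e f)).

Lemma BfP e : e \in Gs -> [/\ optb (Bf e), e \in Bf e, Cf e \subset ~: S,
   #|Cf e| = (r - rk)%N & rho (Bf e) = nu (Bf e :|: Cf e)].
Proof. by move/BCfP => /and5P[h1 h2 h3 /eqP h4 /eqP h5]. Qed.

Lemma optV B : optb B -> B \in Vb.
Proof. by move=> /andP[]; rewrite inE => /andP[]. Qed.

Lemma ke e : e \in Gs -> Tadd (Some (lam e)) (Uf e e) = z e.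
Proof.
move=> eG; have [oB eB CS cC eC] := BfP eG.
have BV := optV oB; move: (BV); rewrite inE => /and3P[BS _ /eqP nB].
have eS := GS eG.
have eC' : e \notin Cf e by apply/negP => /(subsetP CS); rewrite inE eS.
rewrite /Uf /Hf !inE eqxx /= (negbTE eC') /=.
have -> : e |: (Bf e :\ e :|: Cf e) = Bf e :|: Cf e.
  apply/setP => y; rewrite !inE; case: (eqVneq y e) => [->|] //=; by rewrite eB.
rewrite /lam -eC zG //; case: (rho (Bf e)) nB => // w _ /=.
by congr Some; lra.
Qed.

Lemma kl e f : e \in Gs -> f \in S -> Tle (z f) (Tadd (Some (lam e)) (Uf e f)).
Proof.
move=> eG fS; case: (eqVneq f e) => [->|nfe]; first by rewrite ke //; exact: Tle_refl.
have [oB eB CS cC eC] := BfP eG.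
have BV := optV oB; move: (BV); rewrite inE => /and3P[BS _ /eqP nB].
rewrite /Uf; case: ifP => fH; first by rewrite TaddN Tle_None.
have fB : f \notin Bf e by apply/negP => fB'; move: fH; rewrite /Hf !inE fB' nfe.
have fC : f \notin Cf e by apply/negP => /(subsetP CS); rewrite inE fS.
have -> : f |: Hf e = (f |: (Bf e :\ e)) :|: Cf e by rewrite /Hf setUA.
have hle := restr_le (f |: (Bf e :\ e)) CS cC.
case hr : (rho (f |: (Bf e :\ e))) hle => [u|]; last by move/Tle_Nonel ->; rewrite TaddN Tle_None.
have B'V : f |: (Bf e :\ e) \in Vb by apply: swapV => //; rewrite hr.
have eF : e \notin Fs by move: eG; rewrite !inE => /andP[-> /negbTE ->].
case zf : (z f) => [vf|]; last first.
  exfalso; have fF : f \in Fs by rewrite inE fS zf.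
  have := @cardF_plus (Bf e) e f eF fF fB.
  have Bs : Bf e \in Vs by move: oB => /andP[].
  move: Bs; rewrite inE => /andP[_ /eqP ->].
  have := leq_bigmax_cond (P := mem Vb) (F := fun J => #|J :&: Fs|) _ B'V.
  rewrite -/aF => h1 h2; move: h1; rewrite h2; by rewrite ltnn.
have fG : f \in Gs by rewrite inE fS zf.
have fF : f \notin Fs by rewrite inE fS zf.
have B's : f |: (Bf e :\ e) \in Vs.
  by rewrite inE B'V cardF_same //; move: oB => /andP[]; rewrite inE => /andP[].
have hW : W (Bf e) <= W (f |: (Bf e :\ e)) by move: oB => /andP[_ /forall_inP]; apply.
move: hW; rewrite /W sum_swap // hr /lam -eC.
case: (rho (Bf e)) nB => // w _ /=.
case: (nu _) => [u'|] //= hW hu.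
have zfr : zr f = vf by rewrite /zr zf.
rewrite -zfr; lra.
Qed.

Lemma lift_lemma : exists x, CC r nu x /\ forall s, s \in S -> x s = z s.
Proof.
exists xl; split.
- apply: min_CC => e eG; apply: cocircuit_CC => //.
  have [oB eB CS cC eC] := BfP eG.
  have BV := optV oB; move: (BV); rewrite inE => /and3P[BS /eqP cB _].
  have BeS : Bf e :\ e \subset S by apply: subset_trans BS; apply: subD1set.
  rewrite /Hf (card_disj BeS CS) cC.
  have := cardsD1 e (Bf e); rewrite eB cB => h.
  have := rank_le r nu S; rewrite -/(rkC r nu S).
  move: h; rewrite add1n => h; rewrite h; lia.
- move=> s sS; rewrite /xl.
  case zs : (z s) => [v|].
  + have sG : s \in Gs by rewrite inE sS zs.
    apply: Tle_anti.
    * rewrite -zs -(ke sG).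
      exact: (@bmin_le _ _ (mem Gs) (fun e => Tadd (Some (lam e)) (Uf e s))).
    * rewrite -zs; apply: bmin_glb => e eG; exact: kl.
  + apply: bmin_None => e eG; apply: Tle_Nonel; rewrite -zs; exact: kl.
Qed.
End Lift.


Section Basis.
Variable R : realType.
Variable E : finType.
Variable r : nat.
Variable nu : {set E} -> T R.
Variable S : {set E}.
Lemma basis_S : valuated_matroid r nu -> exists B0 : {set E},
  [/\ #|B0| = r, nu B0 <> None, #|B0 :&: S| = rkC r nu S & rhoC r nu S (B0 :&: S) <> None].
Proof.
move=> vm; have [B0 [cB nB iB]] := rank_att S vm.
exists B0; split => //.
have hC : B0 :\: S \subset ~: S by apply/subsetP => y; rewrite !inE => /andP[].
have cC : #|B0 :\: S| = (r - rkC r nu S)%N by rewrite /rkC -iB -cB -(cardsID S B0) addKn.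
have := restr_le (B0 :&: S) hC cC; rewrite setID.
by case: (rhoC r nu S (B0 :&: S)) => //; case: (nu B0) nB.
Qed.
End Basis.

Section Pointed.
Variable R : realType.
Variable n r : nat.
Variable mu : {set 'I_n} -> T R.
Implicit Types (I J : {set option 'I_n}).

Definition unS I := [set i | Some i \in I].

Lemma pointed_S I : None \notin I -> pointed mu I = mu (unS I).
Proof. by rewrite /pointed => /negbTE ->. Qed.

Lemma unS_imset (I' : {set 'I_n}) : unS (Some @: I') = I'.
Proof. apply/setP => i; rewrite inE; apply/imsetP/idP => [[j jI [->]]//|iI]; by exists i. Qed.

Lemma imset_unS I : None \notin I -> Some @: unS I = I.
Proof.
move=> NI; apply/setP => o; apply/imsetP/idP => [[i]|oI]; first by rewrite inE => h ->.
case: o oI NI => [i|] oI NI; last by rewrite oI in NI.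
by exists i; rewrite ?inE.
Qed.

Lemma card_Some (I' : {set 'I_n}) : #|Some @: I'| = #|I'|.
Proof. apply: card_imset; move=> a b [] //. Qed.

Lemma card_unS I : None \notin I -> #|unS I| = #|I|.
Proof. by move=> NI; rewrite -{2}(imset_unS NI) card_Some. Qed.

Lemma unS_D1 I k : unS (I :\ Some k) = unS I :\ k.
Proof. apply/setP => i; rewrite !inE; congr (_ && _). Qed.

Lemma unS_U1 I k : unS (Some k |: I) = k |: unS I.
Proof. apply/setP => i; rewrite !inE; congr (_ || _). Qed.

Lemma notNone_D1 I a : None \notin I -> None \notin I :\ a.
Proof. by move=> h; rewrite inE negb_and h orbT. Qed.

Lemma tm_unS I (X : option 'I_n -> T R) k : None \notin I ->
  tm (pointed mu) I X (Some k) = tm mu (unS I) (fun i => X (Some i)) k.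
Proof.
move=> NI; rewrite /tm /circ.
have -> : (k \in unS I) = (Some k \in I) by rewrite inE.
case: ifP => // kI; by rewrite pointed_S ?notNone_D1 // unS_D1.
Qed.

Lemma card_swap (I J : {set option 'I_n}) : #|I| = #|J| -> #|J :\: I| = #|I :\: J|.
Proof.
move=> c; have h1 := cardsID I J; have h2 := cardsID J I; rewrite setIC in h2.
lia.
Qed.

Lemma pointed_vm : valuated_matroid r mu -> valuated_matroid r (pointed mu).
Proof.
move=> [[B [cB nB]] hex]; split.
  exists (Some @: B); rewrite card_Some pointed_S ?unS_imset //.
  by apply/imsetP => -[].
move=> I J cI cJ i iIJ.
case NI: (None \in I); last case NJ: (None \in J).
- have : (0 < #|J :\: I|)%N by rewrite card_swap ?cI ?cJ //; apply/card_gt0P; exists i.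
  move/card_gt0P => [j jJI]; exists j => //.
  by rewrite /pointed NI /=; apply: Tle_None.
- have : (0 < #|J :\: I|)%N by rewrite card_swap ?cI ?cJ //; apply/card_gt0P; exists i.
  move/card_gt0P => [j jJI]; exists j => //.
  by rewrite /pointed NJ TaddN; apply: Tle_None.
- move/negbT: NI => NI; move/negbT: NJ => NJ.
  case: i iIJ => [i0|] iIJ; last by move: iIJ; rewrite inE (negbTE NI) andbF.
  have cI' : #|unS I| = r by rewrite card_unS.
  have cJ' : #|unS J| = r by rewrite card_unS.
  have i0in : i0 \in unS I :\: unS J by rewrite !inE; move: iIJ; rewrite !inE andbC.
  have [j0 j0in hle] := hex _ _ cI' cJ' i0 i0in.
  exists (Some j0); first by move: j0in; rewrite !inE andbC.
  rewrite !pointed_S //.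
  + by rewrite unS_U1 unS_D1 unS_U1 unS_D1.
  + apply/negP; rewrite !inE => /orP[//|/andP[_ h]]; by rewrite h in NJ.
  + apply/negP; rewrite !inE => /orP[//|/andP[_ h]]; by rewrite h in NI.
Qed.

Definition hat (x : 'I_n -> T R) (o : option 'I_n) : T R :=
  if o is Some i then x i else None.

Lemma CC_hat x : CC r mu x -> CC r (pointed mu) (hat x).
Proof.
move=> hcc I cI e he.
have [eI nIe xe] := tm_fin he.
case: e eI nIe xe he => [e0|] eI nIe xe he //.
have NI : None \notin I.
  apply/negP => NI; apply: nIe; rewrite /pointed.
  by have -> : None \in I :\ Some e0 by rewrite !inE NI.
have cI' : #|unS I| = r.+1 by rewrite card_unS.
rewrite tm_unS // in he.
have [e1 ne1 hle] := hcc _ cI' e0 he.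
exists (Some e1); first by apply: contra ne1 => /eqP [->].
by rewrite !tm_unS.
Qed.

Lemma CC_unhat (X : option 'I_n -> T R) : CC r (pointed mu) X -> CC r mu (fun i => X (Some i)).
Proof.
move=> hcc I' cI' e he.
have NI : None \notin Some @: I' by apply/imsetP => -[].
have cI : #|Some @: I'| = r.+1 by rewrite card_Some.
have he' : tm (pointed mu) (Some @: I') X (Some e) <> None by rewrite tm_unS // unS_imset.
have [e1 ne1 hle] := hcc _ cI _ he'.
have [e1I _ _] := tm_fin (Tle_fin hle he').
case: e1 e1I ne1 hle => [e2|] e1I ne1 hle; last by rewrite e1I in NI.
exists e2; first by apply: contra ne1 => /eqP ->.
by move: hle; rewrite !tm_unS // unS_imset.
Qed.

End Pointed.


Section Induced.
Variable R : realType.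
Variable n r : nat.
Variable mu : {set 'I_n} -> T R.
Variable f1 : option 'I_n -> option 'I_n.
Variable f2 : option 'I_n -> T R.
Hypothesis hf2 : forall i, f1 i <> None -> f2 i = Some 0.
Hypothesis vm : valuated_matroid r mu.

Local Notation P := (pointed mu).
Local Notation S := (fimage f1).
Local Notation rho := (restr r P S).
Local Notation rk := (rank_in r P S).
Local Notation iota := (induced r mu f1 f2).
Implicit Types (I J B : {set option 'I_n}).

Lemma rho_None J : None \in J -> rho J = None.
Proof.
move=> NJ; apply: restr_None => C; rewrite /pointed.
by have -> : None \in J :|: C by rewrite inE NJ.
Qed.

Lemma Tsum0 B : (forall b, b \in B -> f1 b <> None) -> Tsum B f2 = Some 0.
Proof.
move=> h; rewrite /Tsum; apply: (big_ind (fun v => v = Some 0)) => //.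
- by move=> a b -> ->; rewrite /= addr0.
- by move=> i iB; apply: hf2; apply: h.
Qed.

Lemma iota_eq B : (forall b, b \in B -> f1 b <> None) -> #|f1 @: B| = #|B| ->
  iota B = rho (f1 @: B).
Proof. by move=> h c; rewrite /induced c eqxx Tsum0 // Tadd0. Qed.

Lemma iota_fin B : iota B <> None -> #|f1 @: B| = #|B| /\ forall b, b \in B -> f1 b <> None.
Proof.
rewrite /induced; case: eqP => // c h; split => // b bB fb.
apply: h; rewrite rho_None //; by apply/imsetP; exists b.
Qed.

Lemma imsetD1_inj I c : {in I &, injective f1} -> c \in I -> f1 @: (I :\ c) = (f1 @: I) :\ f1 c.
Proof.
move=> inj cI; apply/setP => y; apply/imsetP/idP.
- move=> [a]; rewrite !inE => /andP[nac aI] ->; rewrite (imset_f f1 aI) andbT.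
  by apply: contra nac => /eqP /inj -> //.
- rewrite !inE => /andP[nyc /imsetP[a aI ya]]; exists a => //.
  rewrite !inE aI andbT; apply: contra nyc => /eqP ac; by rewrite ya ac.
Qed.

Lemma circ_iota I c : {in I &, injective f1} -> (forall b, b \in I -> f1 b <> None) ->
  c \in I -> circ iota I c = circ rho (f1 @: I) (f1 c).
Proof.
move=> inj hI cI; rewrite /circ cI imset_f //.
rewrite iota_eq; first by rewrite imsetD1_inj.
- by move=> b; rewrite inE => /andP[_]; apply: hI.
- apply/eqP/imset_injP => a b; rewrite !inE => /andP[_ aI] /andP[_ bI]; exact: inj.
Qed.

Lemma tm_iota I c (X : option 'I_n -> T R) (Z : option 'I_n -> T R) :
  {in I &, injective f1} -> (forall b, b \in I -> f1 b <> None) ->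
  c \in I -> X c = Z (f1 c) -> tm iota I X c = tm rho (f1 @: I) Z (f1 c).
Proof. by move=> inj hI cI hX; rewrite /tm circ_iota // hX. Qed.


Lemma imset_D1_same I c : c \in I -> f1 c \in f1 @: (I :\ c) -> f1 @: (I :\ c) = f1 @: I.
Proof.
move=> cI h; apply/eqP; rewrite eqEsubset; apply/andP; split.
  by apply: imsetS; apply: subD1set.
apply/subsetP => y /imsetP[a aI ->].
case: (eqVneq a c) => [->//|nac]; apply: imset_f; by rewrite !inE nac.
Qed.

Lemma dir1 xm : CC r mu xm -> CC rk iota (fun a => hat xm (f1 a)).
Proof.
move=> hcc.
have hA : CCS rk rho S (hat xm) := lemmaA (CC_hat hcc).
move=> I cI a ha.
have [aI nIa Xa] := tm_fin ha.
have [cIa hIa] := iota_fin nIa.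
have fa : f1 a <> None by move: Xa; case: (f1 a).
have hI : forall b, b \in I -> f1 b <> None.
  move=> b bI; case: (eqVneq b a) => [->//|nba]; apply: hIa; by rewrite !inE nba.
have cIa' : #|I :\ a| = #|I|.-1 by rewrite (cardsD1 a I) aI.
case: (boolP (f1 a \in f1 @: (I :\ a))) => [/imsetP[b bIa fab]|nfa].
- exists b; first by move: bIa; rewrite !inE => /andP[].
  have bI : b \in I by move: bIa; rewrite !inE => /andP[].
  have nba : b != a by move: bIa; rewrite !inE => /andP[].
  have e1 : f1 @: (I :\ a) = f1 @: I.
    by apply: imset_D1_same => //; apply/imsetP; exists b.
  have e2 : f1 @: (I :\ b) = f1 @: I.
    apply: imset_D1_same => //; apply/imsetP; exists a; by rewrite ?fab // !inE eq_sym nba.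
  have cIb' : #|I :\ b| = #|I|.-1 by rewrite (cardsD1 b I) bI.
  rewrite !tmE // iota_eq; last by rewrite e2 -e1 cIa cIa' cIb'.
    rewrite iota_eq; last by rewrite cIa.
      by rewrite e1 e2 fab; exact: Tle_refl.
    by move=> c; rewrite inE => /andP[_]; apply: hI.
  by move=> c; rewrite inE => /andP[_]; apply: hI.
- have cfI : #|f1 @: I| = #|I|.
    rewrite -(setD1K aI) imsetU1 cardsU1 nfa cIa cardsU1 !inE eqxx /=.
    by rewrite (cardsD1 a I) aI in cIa' *.
  have inj : {in I &, injective f1} by apply/imset_injP; rewrite cfI.
  have JS : f1 @: I \subset S by apply: imsetS; apply: subsetT.
  have hta : tm rho (f1 @: I) (hat xm) (f1 a) <> None.
    by rewrite -(tm_iota (X := fun a => hat xm (f1 a))).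
  have [s' ns' hle] := hA _ JS (etrans cfI cI) _ hta.
  have [s'I _ _] := tm_fin (Tle_fin hle hta).
  case/imsetP: s'I => b bI sb.
  exists b; first by apply: contra ns' => /eqP ba; rewrite sb ba.
  rewrite !(tm_iota (Z := hat xm)) //; by rewrite -sb.
Qed.

Definition pre (s : option 'I_n) := odflt s [pick a | f1 a == s].
Lemma preK s : s \in S -> f1 (pre s) = s.
Proof.
move=> /imsetP[a _ ->]; rewrite /pre; case: pickP => [a' /eqP //|h].
by move: (h a); rewrite eqxx.
Qed.

Lemma pre_img J : J \subset S -> f1 @: (pre @: J) = J /\ #|pre @: J| = #|J|.
Proof.
move=> JS.
have e : f1 @: (pre @: J) = J.
  rewrite -imset_comp; rewrite -[RHS]imset_id; apply: eq_in_imset => s sJ /=.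
  by rewrite preK // (subsetP JS).
split => //; apply/eqP; rewrite eqn_leq leq_imset_card /=.
by rewrite -{1}e leq_imset_card.
Qed.

Lemma dir2 X : CC rk iota X -> exists Xh, [/\ CC r P Xh,
   forall a, f1 a <> None -> Xh (f1 a) = X a & forall a, f1 a = None -> X a = None].
Proof.
move=> hcc.
have vmP := pointed_vm vm.
have [B0 [cB0 nB0 iB0 nr]] := basis_S S vmP.
have NB0 : None \notin B0 by apply/negP => h; apply: nB0; rewrite /pointed h.
have B0S : B0 :&: S \subset S by apply: subsetIr.
have [eBi cBi0] := pre_img B0S.
have hBi : forall b, b \in pre @: (B0 :&: S) -> f1 b <> None.
  move=> b bB fb; move: (imset_f f1 bB); rewrite eBi fb inE => /andP[h _].
  by rewrite h in NB0.
have cBi : #|pre @: (B0 :&: S)| = rk by rewrite cBi0 iB0.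
have nBi : iota (pre @: (B0 :&: S)) <> None by rewrite iota_eq // ?eBi // eBi cBi0.
have loopX : forall a, f1 a = None -> X a = None.
  move=> a fa; apply: (loop_none hcc cBi nBi) => B' aB'.
  case hB : (iota B') => [v|] //; exfalso.
  have hB' : iota B' <> None by rewrite hB.
  have [_ h] := iota_fin hB'; by apply: (h _ aB').
have half : forall a b, a != b -> f1 a = f1 b -> X a <> None -> X b <> None /\ Tle (X a) (X b).
  move=> a b nab fab Xa.
  have fa : f1 a <> None by move=> h; apply: Xa; apply: loopX.
  have [B [cBB nB aB]] := basis_contains hcc cBi nBi Xa.
  have [cfB hB] := iota_fin nB.
  have inj : {in B &, injective f1} by apply/imset_injP; rewrite cfB.
  have bB : b \notin B by apply/negP => bB; move: nab; rewrite (inj _ _ aB bB fab) eqxx.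
  have cI : #|b |: B| = rk.+1 by rewrite cardsU1 bB cBB.
  have tmb : tm iota (b |: B) X b = Tadd (iota B) (X b) by rewrite tmE ?setU11 // setU1K.
  have aI : a \in b |: B by rewrite inE aB orbT.
  have Iae : (b |: B) :\ a = b |: (B :\ a).
    apply/setP => y; rewrite !inE; case: (eqVneq y a) => [->|] //=; first by rewrite (negbTE nab).
  have tma : tm iota (b |: B) X a = Tadd (iota B) (X a).
    rewrite tmE // Iae; congr Tadd.
    have hb' : forall c, c \in b |: (B :\ a) -> f1 c <> None.
      move=> c; rewrite !inE => /orP[/eqP ->|/andP[_ cB2]]; [by rewrite -fab|exact: hB].
    have ef : f1 @: (b |: (B :\ a)) = f1 @: B.
      rewrite imsetU1 -fab -imsetU1 setD1K //.
    rewrite iota_eq // ?ef ?cfB // ?iota_eq //.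
    rewrite cardsU1 !inE negb_and bB orbT /= (cardsD1 a B) aB in cfB *; by [].
  have tmc : forall c, c \in B -> c != a -> tm iota (b |: B) X c = None.
    move=> c cB nca; rewrite tmE ?inE ?cB ?orbT //.
    case h : (iota ((b |: B) :\ c)) => [v|] //=; exfalso.
    have hB' : iota ((b |: B) :\ c) <> None by rewrite h.
    have [cf _] := iota_fin hB'.
    have inj' : {in (b |: B) :\ c &, injective f1} by apply/imset_injP; rewrite cf.
    have : a = b.
      apply: inj' => //; rewrite !inE ?eqxx ?aB ?orbT ?andbT //.
      - by rewrite eq_sym.
      - apply/negP => /eqP bc; by rewrite bc cB in bB.
    by move=> ab; move: nab; rewrite ab eqxx.
  have Xb : X b <> None.
    move=> Xb.
    have hta : tm iota (b |: B) X a <> None by rewrite tma; case: (iota B) nB => // ?; case: (X a) Xa.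
    have [c nca hle] := hcc _ cI _ hta.
    have hc := Tle_fin hle hta; have [cI' _ _] := tm_fin hc.
    case/setU1P: cI' => [cb|cB]; first by apply: hc; rewrite cb tmb Xb TaddN.
    by apply: hc; apply: tmc.
  split => //.
  have htb : tm iota (b |: B) X b <> None by rewrite tmb; case: (iota B) nB => // ?; case: (X b) Xb.
  have [c ncb hle] := hcc _ cI _ htb.
  have hc := Tle_fin hle htb; have [cI' _ _] := tm_fin hc.
  case/setU1P: cI' => [cb|cB]; first by rewrite cb eqxx in ncb.
  case: (eqVneq c a) => [ca|nca]; last by exfalso; apply: hc; apply: tmc.
  move: hle; rewrite ca tma tmb; case: (iota B) nB => // w _.
  exact: Tle_add2l_cancel.
have par : forall a b, f1 a = f1 b -> X a = X b.
  move=> a b fab; case: (eqVneq a b) => [->//|nab].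
  have nba : b != a by rewrite eq_sym.
  case Xa : (X a) => [va|]; case Xb : (X b) => [vb|] //.
  - apply: Tle_anti.
    + by have := half a b nab fab; rewrite Xa Xb => -[].
    + by have := half b a nba (esym fab); rewrite Xa Xb => -[].
  - by have := half a b nab fab; rewrite Xa Xb => -[].
  - by have := half b a nba (esym fab); rewrite Xa Xb => -[].
pose z s := if [pick a | f1 a == s] is Some a then X a else None.
have zf : forall a, z (f1 a) = X a.
  move=> a; rewrite /z; case: pickP => [a' /eqP h|h]; first exact: par.
  by move: (h a); rewrite eqxx.
have zNone : z None = None.
  rewrite /z; case: pickP => [a' /eqP h|//]; exact: loopX.
have hz : CCS (rkC r P S) (rhoC r P S) S z.
  move=> J JS cJ s hs.
  have [sJ nJs zs] := tm_fin hs.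
  have NJ : None \notin J.
    apply/negP => NJ; case: (eqVneq s None) => [sN|nsN].
      by apply: zs; rewrite sN.
    by apply: nJs; apply: rho_None; rewrite !inE eq_sym nsN.
  have [eI cI] := pre_img JS.
  have cfI : #|f1 @: (pre @: J)| = #|pre @: J| by rewrite eI cI.
  have inj : {in pre @: J &, injective f1} by apply/imset_injP; rewrite cfI.
  have hI : forall c, c \in pre @: J -> f1 c <> None.
    move=> c cI' fc; move: (imset_f f1 cI'); rewrite eI fc => h; by rewrite h in NJ.
  have htm : forall c, c \in pre @: J -> tm iota (pre @: J) X c = tm rho J z (f1 c).
    by move=> c cI'; rewrite (tm_iota (Z := z)) ?eI ?zf.
  have sI : pre s \in pre @: J by apply: imset_f.
  have fs : f1 (pre s) = s by rewrite preK // (subsetP JS).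
  have hs' : tm iota (pre @: J) X (pre s) <> None by rewrite htm // fs.
  have [b nbs hle] := hcc _ (etrans cI cJ) _ hs'.
  have [bI _ _] := tm_fin (Tle_fin hle hs').
  exists (f1 b).
    apply: contra nbs => /eqP h; case/imsetP: bI => s' s'J bs'.
    by rewrite bs' -h bs' preK // (subsetP JS).
  by move: hle; rewrite !htm // fs.
have [Xh [hXh eXh]] := lift_lemma vmP hz.
exists Xh; split => //.
- move=> a fa; rewrite eXh ?zf //; apply: imset_f; exact: in_setT.
Qed.
End Induced.


Section Final.
Variable R : realType.
Variable K : fieldType.
Variable val : K -> T R.
Variable n r : nat.
Variable mu : {set 'I_n} -> T R.
Hypothesis hval : nonarch_valuation val.
Hypothesis vm : valuated_matroid r mu.

Lemma val0 : val 0 = None.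
Proof. by case: hval => h _ _; apply/h. Qed.

Lemma val1 : val 1 = Some 0.
Proof.
case: hval => h hm _; have := hm 1 1; rewrite mul1r.
case e : (val 1) => [v|] /=; last by move: e => /h /eqP; rewrite oner_eq0.
by move=> [] hv; congr Some; lra.
Qed.

Lemma tmv (f1 : option 'I_n -> option 'I_n) (f2 : option 'I_n -> T R) (A : 'M[K]_n) xm i :
  (forall i, f1 i <> None -> f2 i = Some 0) -> assoc_matrix val f1 f2 A ->
  tmatvec val A xm i = hat xm (f1 (Some i)).
Proof.
move=> hf2 [_ hA]; rewrite /tmatvec.
case h : (f1 (Some i)) => [j|] /=.
- rewrite (bigD1 j) //=.
  have -> : \big[@Tmin R/None]_(j' < n | j' != j) Tadd (val (A i j')) (xm j') = None.
    apply: (@bmin_None _ _ (fun j' => j' != j) (fun j' => Tadd (val (A i j')) (xm j'))).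
    move=> j' nj; have [_ h0] := hA i j'; rewrite h0 ?val0 //.
    by rewrite h => -[] e; move: nj; rewrite e eqxx.
  have [h1 _] := hA i j; rewrite h1 // hf2; last by rewrite h.
  by rewrite TaddC Tadd0 /Tmin Tle_None.
- apply: (@bmin_None _ _ xpredT (fun j' => Tadd (val (A i j')) (xm j'))) => j' _.
  have [_ h0] := hA i j'; by rewrite h0 ?val0 // h.
Qed.

Lemma part1 (f1 : option 'I_n -> option 'I_n) (f2 : option 'I_n -> T R) (A : 'M[K]_n) :
  (forall i, f1 i <> None -> f2 i = Some 0) -> assoc_matrix val f1 f2 A ->
  Pset_eq (trop_induced r mu f1 f2) (trop_image val r mu A).
Proof.
move=> hf2 hA y [i0 yi0]; split.
- move=> [X hX eX].
  have hcc := trop_CC hX.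
  have [Xh [hXh eXh lX]] := dir2 hf2 vm hcc.
  exists (fun i => Xh (Some i)).
  + apply: CC_trop; last exact: CC_unhat.
    case h : (f1 (Some i0)) => [j|]; last by exfalso; apply: yi0; rewrite -eX lX.
    by exists j; rewrite -h eXh ?h // eX.
  + move=> i; rewrite (tmv _ _ hf2 hA) -eX.
    case h : (f1 (Some i)) => [j|] /=; last by rewrite lX.
    by rewrite -h eXh ?h.
- move=> [xm hx ex].
  exists (fun a => hat xm (f1 a)).
  + apply: CC_trop; last exact: (dir1 hf2 (trop_CC hx)).
    by exists (Some i0); rewrite -(tmv _ _ hf2 hA) ex.
  + by move=> i; rewrite -(tmv _ _ hf2 hA) ex.
Qed.

Lemma part2 (A : 'M[K]_n) : weakly_monomial A -> (forall i j, A i j = 0 \/ A i j = 1) ->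
  Pset_eq (trop_induced r mu (assoc_map1 A) (assoc_map2 val A)) (trop_image val r mu A).
Proof.
move=> wA h01; apply: part1.
- case => [i|] //=; case: pickP => [j hj|] // _.
  by case: (h01 i j) => e; [move: hj; rewrite e eqxx | rewrite e val1].
- split.
  + move=> i /=; case: pickP => [j hj|_]; first by exists (A i j).
    by exists 0; rewrite val0.
  + move=> i j /=; split; first by move=> ->.
    case: pickP => [j' hj'|hn] hne.
    * case: (eqVneq (A i j) 0) => // hj; exfalso; apply: hne; congr Some; exact: wA hj' hj.
    * by move: (hn j) => /negbT; rewrite negbK => /eqP.
Qed.
End Final.

Unset Implicit Arguments.
Theorem lemma2p22 (R : realType) (K : fieldType) (val : K -> T R)
    (n r : nat) (mu : {set 'I_n} -> T R) :
  nonarch_valuation val ->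
  valuated_matroid r mu ->
  (* (i) *)
  (forall (f1 : option 'I_n -> option 'I_n) (f2 : option 'I_n -> T R),
     (forall i, f1 i <> None -> f2 i = Some 0) ->
     forall A : 'M[K]_n, weakly_monomial A -> assoc_matrix val f1 f2 A ->
       Pset_eq (trop_induced r mu f1 f2) (trop_image val r mu A))
  /\
  (* (ii) *)
  (forall A : 'M[K]_n, weakly_monomial A ->
     (forall i j, A i j = 0 \/ A i j = 1) ->
       Pset_eq (trop_induced r mu (assoc_map1 A) (assoc_map2 val A))
               (trop_image val r mu A)).
Proof.
move=> hval vm; split.
- move=> f1 f2 hf2 A _ hA; exact: part1.
- move=> A wA h01; exact: part2.
Qed.
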